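(* Let $\gamma>0$ and, for $n\in\mathbb{N}$, let $D_n=\operatorname{diag}(1,2,\dots,n)\in\mathbb{R}^{n\times n}$ and \[ \mathcal{W}_n=\begin{pmatrix} 0 & D_n & 0\\ -D_n & 0 & \gamma D_n\\ 0 & -\gamma D_n & -D_n^2\end{pmatrix}\in\mathbb{R}^{3n\times 3n}, \] acting on $\mathcal{H}_n=\mathbb{C}^{3n}$ with the Euclidean norm, and let $T_n(t)=e^{t\mathcal{W}_n}$. Then the semigroups $T_n(\cdot)$ are uniformly polynomially stable of order $\alpha=2$: there exists a constant $M>0$, independent of $n$, such that \[ \big\|T_n(t)\mathcal{W}_n^{-1}\big\|_{\mathcal{L}(\mathcal{H}_n)}\le \frac{M}{t^{1/2}}\qquad\text{for all } t>0 \text{ and all } n\in\mathbb{N}. \]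
   Context: $\mathcal{W}_n$ is the matrix obtained in the paper from a modal approximation of the weakly coupled thermoelastic system under Dirichlet (displacement)–Neumann (temperature) boundary conditions. Each $\mathcal{W}_n$ is invertible and generates a contraction semigroup, since $\operatorname{Re}(\mathcal{W}_n y,y)=-\|D_n\theta\|^2\le 0$ for $y=(u,v,\theta)$. *)

(* Defs.v *)
From HB Require Import structures.
From mathcomp Require Import all_boot all_order all_algebra.
From mathcomp Require Import all_classical all_reals all_analysis.
From mathcomp Require Import complex.
Set Implicit Arguments.
Unset Strict Implicit.
Unset Printing Implicit Defensive.
Import Order.TTheory GRing.Theory Num.Theory.
Import numFieldNormedType.Exports.
Local Open Scope classical_set_scope.
Local Open Scope ring_scope.

Definition expmx (R : realType) (m : nat) (A : 'M[R]_m) : 'M[R]_m :=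
  lim ((fun N : nat => \sum_(k < N) (k`!%:R)^-1 *: (A ^+ k)) @ \oo).

Definition Dn (R : realType) (n : nat) : 'M[R]_n :=
  diag_mx (\row_(i < n) (i.+1)%:R).

(* The 3n x 3n matrix W_n (block structure n + (n + n)):
     [  0      D      0    ]
     [ -D      0     g D   ]
     [  0    -g D   -D^2   ]                                              *)
Definition Wn (R : realType) (gamma : R) (n : nat) : 'M[R]_(n + (n + n)) :=
  let D := Dn R n in
  block_mx 0 (row_mx D 0)
           (col_mx (- D) 0) (block_mx 0 (gamma *: D) (- (gamma *: D)) (- (D *m D))).

Definition Tn (R : realType) (gamma : R) (n : nat) (t : R) : 'M[R]_(n + (n + n)) :=
  expmx (t *: Wn gamma n).

Definition cnorm (R : realType) (m : nat) (v : 'cV[R[i]]_m) : R :=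
  Num.sqrt (\sum_(i < m) ((complex.Re (v i 0)) ^+ 2 + (complex.Im (v i 0)) ^+ 2)).

Definition cmx (R : realType) (m : nat) (A : 'M[R]_m) : 'M[R[i]]_m :=
  map_mx (fun x : R => (x%:C)%C) A.

Definition opnorm_le (R : realType) (m : nat) (A : 'M[R]_m) (c : R) : Prop :=
  forall v : 'cV[R[i]]_m, cnorm (cmx A *m v) <= c * cnorm v.

(* Main.v *)
Require Import Defs.
From HB Require Import structures.
From mathcomp Require Import all_boot all_order all_algebra.
From mathcomp Require Import all_classical all_reals all_analysis.
From mathcomp Require Import complex.
Import Order.TTheory GRing.Theory Num.Theory.
Local Open Scope ring_scope.

From mathcomp Require Import ring lra.
Import numFieldNormedType.Exports.
Local Open Scope classical_set_scope.
Local Open Scope ring_scope.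
Set Implicit Arguments. Unset Strict Implicit. Unset Printing Implicit Defensive.

Section S.
Variable R : realType.

Lemma mx_pow_bound m (A : 'M[R]_m) a : 0 <= a -> (forall i j, `|A i j| <= a) ->
  forall k i j, `|(A ^+ k) i j| <= (m%:R * a) ^+ k.
Proof.
move=> a0 hA; elim=> [|k IH] i j.
  rewrite expr0 /=. rewrite mxE. case: (i == j); rewrite /= ?normr1 ?normr0 //.
rewrite exprSr -mulmxE mxE exprSr.
apply: le_trans (ler_norm_sum _ _ _) _.
apply: le_trans (_ : \sum_(p < m) ((m%:R * a) ^+ k * a) <= _).
  apply: ler_sum => p _; rewrite normrM; apply: ler_pM => //.
rewrite sumr_const card_ord -mulr_natr; rewrite le_eqVlt; apply/orP; left; apply/eqP; ring.
Qed.

Definition cA m (A : 'M[R]_m) d (i j : 'I_m) : nat -> R :=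
  fun k => (k`!%:R)^-1 * (A ^+ (k + d)) i j.

Lemma cvg_cA m (A : 'M[R]_m) d i j (K : R) : cvgn (pseries (cA A d i j) K).
Proof.
pose a := \sum_p \sum_q `|A p q|.
have a0 : 0 <= a by apply: sumr_ge0 => p _; apply: sumr_ge0.
have hA : forall p q, `|A p q| <= a.
  move=> p q; rewrite /a (bigD1 p) //= (bigD1 q) //= -addrA lerDl.
  by apply: addr_ge0; [apply: sumr_ge0|apply: sumr_ge0 => ? _; apply: sumr_ge0].
apply: normed_cvg.
pose b := m%:R * a.
have b0 : 0 <= b by apply: mulr_ge0.
have hb : forall k, `|(A ^+ k) i j| <= b ^+ k by move=> k; apply: mx_pow_bound.
clearbody b.
have := @is_cvg_seriesZ _ _ (b ^+ d) (is_cvg_series_exp_coeff (b * `|K|)).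
apply: series_le_cvg => [k|k|k] /=.
- by [].
- by rewrite exp_coeffE /= mulr_ge0 // ?mulr_ge0 // ?exprn_ge0 // ?mulr_ge0 // invr_ge0.
have h := hb (k + d).
rewrite exp_coeffE /cA normrM normrM normrX normfV normr_nat.
rewrite (_ : (b ^+ d *: _) k = (k`!%:R)^-1 * (b ^+ (k + d)) * `|K| ^+ k); last first.
  change (b ^+ d * ((k`!%:R)^-1 * (b * `|K|) ^+ k) = (k`!%:R)^-1 * (b ^+ (k + d)) * `|K| ^+ k).
  by rewrite exprD exprMn; ring.
apply: ler_pM => //.
by apply: ler_wpM2l => //; rewrite invr_ge0.
Qed.


Lemma diffs_cA m (A : 'M[R]_m) d i j : pseries_diffs (cA A d i j) = cA A d.+1 i j.
Proof.
apply/funext => k; rewrite /pseries_diffs /cA factS natrM invfM !mulrA mulfV ?pnatr_eq0 //.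
by rewrite mul1r addSnnS.
Qed.

Definition ent m (A : 'M[R]_m) i j (t : R) := limn (pseries (cA A 0 i j) t).

Lemma ent_derive m (A : 'M[R]_m) (i j : 'I_m) (t : R) :
  is_derive t (1 : R) (ent A i j) (limn (pseries (cA A 1 i j) t)).
Proof.
have := @pseries_snd_diffs R (cA A 0 i j) (`|t| + 1) t (@cvg_cA m A 0 i j _).
rewrite !diffs_cA; move=> /(_ (@cvg_cA m A 1 i j _) (@cvg_cA m A 2 i j _)).
apply; rewrite [X in _ < X]ger0_norm ?ltrDl //.
Qed.

Lemma cvg_sum_ord m (f : 'I_m -> nat -> R) (l : 'I_m -> R) :
  (forall p, f p n @[n --> \oo] --> l p) ->
  (\sum_p f p n) @[n --> \oo] --> \sum_p l p.
Proof.
move=> h.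
have -> : (fun n => \sum_p f p n) = \sum_p f p.
  by apply/funext => n; rewrite fct_sumE.
apply: (big_ind2 (fun F x => F n @[n --> \oo] --> x)).
- exact: cvg_cst.
- by move=> F1 x1 F2 x2 h1 h2; apply: cvgD.
- by move=> p _; apply: h.
Qed.


Lemma pseries_cA1 m (A : 'M[R]_m) i j t :
  pseries (cA A 1 i j) t = (fun N => \sum_p A i p * pseries (cA A 0 p j) t N).
Proof.
apply/funext => N; rewrite /pseries /series /=.
under eq_bigr do rewrite /cA addn1 exprS -mulmxE mxE mulr_sumr mulr_suml.
rewrite exchange_big /=; apply: eq_bigr => p _.
rewrite mulr_sumr; apply: eq_bigr => k _; rewrite /cA addn0; ring.
Qed.

Lemma lim_cA1 m (A : 'M[R]_m) i j t :
  limn (pseries (cA A 1 i j) t) = \sum_p A i p * ent A p j t.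
Proof.
rewrite pseries_cA1; apply: cvg_lim => //.
apply: cvg_sum_ord => p.
apply: cvgMl_tmp; exact: (@cvg_cA m A 0 p j t).
Qed.


Lemma mx_cvg_entry m n (f : nat -> 'M[R]_(m,n)) (E : 'M[R]_(m,n)) :
  (forall i j, f N i j @[N --> \oo] --> E i j) -> f N @[N --> \oo] --> E.
Proof.
move=> h; apply/(@cvg_mx_entourageP R m n (f @ \oo) _ E) => A entA.
apply: filter_forall => i; apply: filter_forall => j.
have H := (cvg_entourageP _ _).1 (h i j) A entA.
apply: (@filterS _ _ _ (fun N : 'M[R]_(m,n) => A (E i j, N i j))); last exact: H.
by move=> N hN; rewrite inE.
Qed.

Lemma exprZmx m (A : 'M[R]_m) (t : R) k : (t *: A) ^+ k = t ^+ k *: A ^+ k.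
Proof.
elim: k => [|k IH]; first by rewrite !expr0 scale1r.
by rewrite !exprS IH -!mulmxE -scalemxAl -scalemxAr scalerA.
Qed.

Lemma expmx_entry m (A : 'M[R]_m) (t : R) i j : expmx (t *: A) i j = ent A i j t.
Proof.
suff -> : expmx (t *: A) = \matrix_(i, j) ent A i j t by rewrite mxE.
rewrite /expmx; apply: cvg_lim => //.
apply: mx_cvg_entry => i' j'; rewrite mxE.
have -> : (fun N => (\sum_(k < N) (k`!%:R)^-1 *: (t *: A) ^+ k) i' j') = pseries (cA A 0 i' j') t.
  apply/funext => N; rewrite /pseries /series /= summxE big_mkord; apply: eq_bigr => k _.
  by rewrite exprZmx scalerA /GRing.scale /= mxE /cA addn0 mulrAC.
exact: (@cvg_cA m A 0 i' j' t).
Qed.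


Lemma traj_derive m (A : 'M[R]_m) (y0 : 'cV[R]_m) j (t : R) :
  is_derive t (1 : R) (fun s : R => (expmx (s *: A) *m y0) j 0)
    ((A *m (expmx (t *: A) *m y0)) j 0).
Proof.
have -> : (fun s : R => (expmx (s *: A) *m y0) j 0) =
    \sum_(l < m) (fun s => ent A j l s * y0 l 0).
  apply/funext => s; rewrite fct_sumE mxE; apply: eq_bigr => l _.
  by rewrite expmx_entry.
have -> : (A *m (expmx (t *: A) *m y0)) j 0 =
   \sum_(l < m) ((\sum_p A j p * ent A p l t) * y0 l 0).
  rewrite mulmxA mxE; apply: eq_bigr => l _; rewrite mxE; congr (_ * _).
  by apply: eq_bigr => p _; rewrite expmx_entry.
apply: is_derive_sum => l.
have := is_deriveM (ent_derive A j l t) (is_derive_cst (y0 l 0) t (1 : R)).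
rewrite lim_cA1 => h.
have -> : (fun s : R => ent A j l s * y0 l 0) = ent A j l * cst (y0 l 0) by apply/funext.
eapply is_derive_eq; first exact: h.
by rewrite scaler0 add0r /GRing.scale /= mulrC.
Qed.


Lemma Dn_mul n (x : 'cV[R]_n) i : (Dn R n *m x) i 0 = (i.+1)%:R * x i 0.
Proof. by rewrite /Dn mul_diag_mx mxE mxE. Qed.

Lemma Wn_mul (g : R) n (y : 'cV[R]_(n + (n + n))) :
  Wn g n *m y = col_mx (Dn R n *m usubmx (dsubmx y))
     (col_mx (- (Dn R n *m usubmx y) + g *: (Dn R n *m dsubmx (dsubmx y)))
             (- (g *: (Dn R n *m usubmx (dsubmx y))) - Dn R n *m (Dn R n *m dsubmx (dsubmx y)))).
Proof.
rewrite -{1}(vsubmxK y) -{1}(vsubmxK (dsubmx y)) /Wn mul_block_col mul_row_col.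
rewrite mul_block_col mul_col_mx !mul0mx add_col_mx !add0r !addr0.
by rewrite !mulNmx -!scalemxAl mulmxA.
Qed.


Definition qL (a b u v w : R) := u * u + v * v + w * w + a * (v * w) + b * (u * v).

Lemma qL_bounds a b u v w : 0 <= a <= 1/4 -> 0 <= b <= 1/4 ->
  3/4 * (u^+2 + v^+2 + w^+2) <= qL a b u v w <= 5/4 * (u^+2 + v^+2 + w^+2).
Proof.
move=> /andP[a0 a1] /andP[b0 b1]; rewrite /qL.
have h1 : 0 <= (v - w)^+2 by apply: sqr_ge0.
have h2 : 0 <= (v + w)^+2 by apply: sqr_ge0.
have h3 : 0 <= (u - v)^+2 by apply: sqr_ge0.
have h4 : 0 <= (u + v)^+2 by apply: sqr_ge0.
apply/andP; split; nra.
Qed.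

Lemma mode_deriv (g d k u v w : R) : 0 < g -> 0 < d ->
  d * (2 * (1 + g^+2 + (g^+2/2 - 1)^+2)) = 1 -> 1 <= k ->
  2 * (u * (k * v)) + 2 * (v * (- (k * u) + g * (k * w))) + 2 * (w * (- (g * (k * v)) - k * (k * w)))
  + d * g / k * ((- (k * u) + g * (k * w)) * w + v * (- (g * (k * v)) - k * (k * w)))
  + d * g^+2 / 2 / k * ((k * v) * v + u * (- (k * u) + g * (k * w)))
  <= - (d * g^+2 / 4) * (u^+2 + v^+2 + w^+2).
Proof.
move=> g0 d0 hd k1.
set du := k * v. set dv := - (k * u) + g * (k * w).
set dw := - (g * (k * v)) - k * (k * w).
set a := d * g / k. set b := d * g^+2 / 2 / k.
set c2 := g^+2/2 - 1.
have k0 : k != 0 by rewrite gt_eqF // (lt_le_trans _ k1).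
set C := -2 * k^+2 + 5/4 * d * g^+2 + d * k^+2 + d * c2^+2.
have key : 2 * (u * du) + 2 * (v * dv) + 2 * (w * dw) + a * (dv * w + v * dw) + b * (du * v + u * dv)
  + (d * g^+2 / 4) * (u^+2 + v^+2 + w^+2) =
  - d * ((g/2 * v + k * w)^+2 + (g/2 * u - c2 * w)^+2) + C * w^+2.
  by rewrite /du /dv /dw /a /b /C /c2; field.
have hC : C <= 0.
  have hk2 : 1 <= k^+2 by rewrite -[1](expr1n _ 2); rewrite lerXn2r // ?nnegrE //; lra.
  have hdc : d * (g^+2 + c2^+2) <= 1/2.
    rewrite /c2 in hd *; have := sqr_ge0 (g^+2/2 - 1); nra.
  have hd2 : d <= 1/2.
    have := sqr_ge0 c2; have := sqr_ge0 g; rewrite /c2 in hd *; nra.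
  rewrite /C; nra.
have hs : 0 <= (g/2 * v + k * w)^+2 + (g/2 * u - c2 * w)^+2 by apply: addr_ge0; apply: sqr_ge0.
have hw : 0 <= w^+2 by apply: sqr_ge0.
have : C * w^+2 <= 0 by nra.
have : 0 <= d * ((g/2 * v + k * w)^+2 + (g/2 * u - c2 * w)^+2) by apply: mulr_ge0 => //; apply: ltW.
lra.
Qed.


Lemma qL_derive (a b : R) (fu fv fw : R -> R) (t du dv dw : R) :
  is_derive t (1 : R) fu du -> is_derive t (1 : R) fv dv -> is_derive t (1 : R) fw dw ->
  is_derive t (1 : R) (fun s => qL a b (fu s) (fv s) (fw s))
   (2 * (fu t * du) + 2 * (fv t * dv) + 2 * (fw t * dw) + a * (dv * fw t + fv t * dw)
    + b * (du * fv t + fu t * dv)).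
Proof.
move=> hu hv hw.
have -> : (fun s => qL a b (fu s) (fv s) (fw s)) =
   fu * fu + fv * fv + fw * fw + a \*: (fv * fw) + b \*: (fu * fv).
  by apply/funext => s; rewrite /qL.
have h1 := is_deriveM hu hu. have h2 := is_deriveM hv hv. have h3 := is_deriveM hw hw.
have h4 := is_deriveZ a (is_deriveM hv hw). have h5 := is_deriveZ b (is_deriveM hu hv).
have := is_deriveD (is_deriveD (is_deriveD (is_deriveD h1 h2) h3) h4) h5.
move=> h; eapply is_derive_eq; first exact: h.
rewrite /GRing.scale /=; ring.
Qed.


Lemma ent0 m (A : 'M[R]_m) i j : ent A i j 0 = (1%:M : 'M[R]_m) i j.
Proof.
rewrite /ent; apply: lim_near_cst => //.
exists 1%N => // N /= hN.
case: N hN => // N _.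
rewrite /pseries /series /= big_nat_recl //= expr0 mulr1 big1 ?addr0.
  by rewrite /cA addn0 expr0 fact0 invr1 mul1r.
by move=> k _; rewrite expr0n /= mulr0.
Qed.

Lemma expmx0_mul m (A : 'M[R]_m) (y : 'cV[R]_m) : expmx (0 *: A) *m y = y.
Proof.
suff -> : expmx (0 *: A) = 1%:M by rewrite mul1mx.
by apply/matrixP => i j; rewrite expmx_entry ent0.
Qed.

Definition nrm2 m (y : 'cV[R]_m) := \sum_(r < m) y r 0 ^+ 2.

Lemma nrm2_split n (y : 'cV[R]_(n + (n + n))) : nrm2 y =
  \sum_(i < n) (usubmx y i 0 ^+ 2 + usubmx (dsubmx y) i 0 ^+ 2 + dsubmx (dsubmx y) i 0 ^+ 2).
Proof.
rewrite /nrm2 big_split_ord /= big_split_ord /= !big_split /= addrA.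
by congr (_ + _ + _); apply: eq_bigr => i _; rewrite !mxE.
Qed.


Lemma dg_small (g d : R) : 0 < g -> 0 < d -> d * (2 * (1 + g^+2 + (g^+2/2 - 1)^+2)) = 1 ->
  d * g <= 1/4 /\ d * g^+2 / 2 <= 1/4.
Proof.
move=> g0 d0 hd.
have e1 : 0 <= d * (g - 1)^+2 by apply: mulr_ge0; [apply: ltW|apply: sqr_ge0].
have e2 : 0 <= d * (g^+2/2 - 1)^+2 by apply: mulr_ge0; [apply: ltW|apply: sqr_ge0].
have hd' : 2 * d + 2 * (d * g^+2) + 2 * (d * (g^+2/2 - 1)^+2) = 1 :> R by rewrite -[in RHS]hd; ring.
have e1' : 0 <= d * g^+2 - 2 * (d * g) + d by rewrite (_ : _ - _ + _ = d * (g - 1)^+2) //; ring.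
split; lra.
Qed.

Section Lyap.
Variables (g d : R) (n : nat).
Hypotheses (g0 : 0 < g) (d0 : 0 < d) (hd : d * (2 * (1 + g^+2 + (g^+2/2 - 1)^+2)) = 1).

Definition kk (i : 'I_n) : R := (i.+1)%:R.

Lemma kk1 i : 1 <= kk i.
Proof. by rewrite /kk ler1n. Qed.

Definition Lf (y : 'cV[R]_(n + (n + n))) := \sum_(i < n)
  qL (d * g / kk i) (d * g^+2 / 2 / kk i) (usubmx y i 0) (usubmx (dsubmx y) i 0) (dsubmx (dsubmx y) i 0).

Lemma coef_bounds (c : R) i : 0 <= c <= 1/4 -> 0 <= c / kk i <= 1/4.
Proof.
move=> /andP[c0 c1]; have k1 := kk1 i; have k0 : 0 < kk i by apply: lt_le_trans k1.
apply/andP; split; first by apply: divr_ge0 => //; apply: ltW.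
rewrite ler_pdivrMr //; nra.
Qed.

Lemma Lf_bounds y : 3/4 * nrm2 y <= Lf y <= 5/4 * nrm2 y.
Proof.
have [h1 h2] := dg_small g0 d0 hd.
have e1 : 0 <= d * g by apply: mulr_ge0; apply: ltW.
have e2 : 0 <= d * g^+2 / 2 by apply: divr_ge0 => //; apply: mulr_ge0; [apply: ltW|apply: sqr_ge0].
rewrite nrm2_split !mulr_sumr /Lf; apply/andP; split; apply: ler_sum => i _.
- have ha := @coef_bounds (d * g) i (introT andP (conj e1 h1)).
  have hb := @coef_bounds (d * g^+2/2) i (introT andP (conj e2 h2)).
  by have /andP[] := qL_bounds (usubmx y i 0) (usubmx (dsubmx y) i 0) (dsubmx (dsubmx y) i 0) ha hb.
- have ha := @coef_bounds (d * g) i (introT andP (conj e1 h1)).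
  have hb := @coef_bounds (d * g^+2/2) i (introT andP (conj e2 h2)).
  by have /andP[] := qL_bounds (usubmx y i 0) (usubmx (dsubmx y) i 0) (dsubmx (dsubmx y) i 0) ha hb.
Qed.


Definition Y (y0 : 'cV[R]_(n + (n + n))) (t : R) := expmx (t *: Wn g n) *m y0.

Lemma du_derive y0 (t : R) i : is_derive t (1 : R) (fun s => usubmx (Y y0 s) i 0)
   (kk i * usubmx (dsubmx (Y y0 t)) i 0).
Proof.
have := traj_derive (Wn g n) y0 (lshift (n+n) i) t.
rewrite Wn_mul col_mxEu Dn_mul => h.
have -> : (fun s => usubmx (Y y0 s) i 0) = (fun s => (expmx (s *: Wn g n) *m y0) (lshift (n+n) i) 0).
  by apply/funext => s; rewrite mxE.
by eapply is_derive_eq; first exact: h.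
Qed.

Lemma dv_derive y0 (t : R) i : is_derive t (1 : R) (fun s => usubmx (dsubmx (Y y0 s)) i 0)
   (- (kk i * usubmx (Y y0 t) i 0) + g * (kk i * dsubmx (dsubmx (Y y0 t)) i 0)).
Proof.
have := traj_derive (Wn g n) y0 (rshift n (lshift n i)) t.
rewrite Wn_mul -/(Y y0 t) col_mxEd col_mxEu /Dn !mul_diag_mx !mxE => h.
have -> : (fun s => usubmx (dsubmx (Y y0 s)) i 0) = (fun s => (expmx (s *: Wn g n) *m y0) (rshift n (lshift n i)) 0).
  by apply/funext => s; rewrite !mxE.
by eapply is_derive_eq; first exact: h.
Qed.

Lemma dw_derive y0 (t : R) i : is_derive t (1 : R) (fun s => dsubmx (dsubmx (Y y0 s)) i 0)
   (- (g * (kk i * usubmx (dsubmx (Y y0 t)) i 0)) - kk i * (kk i * dsubmx (dsubmx (Y y0 t)) i 0)).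
Proof.
have := traj_derive (Wn g n) y0 (rshift n (rshift n i)) t.
rewrite Wn_mul -/(Y y0 t) col_mxEd col_mxEd /Dn !mul_diag_mx !mxE => h.
have -> : (fun s => dsubmx (dsubmx (Y y0 s)) i 0) = (fun s => (expmx (s *: Wn g n) *m y0) (rshift n (rshift n i)) 0).
  by apply/funext => s; rewrite !mxE.
by eapply is_derive_eq; first exact: h.
Qed.


Lemma Lf_derive y0 (t : R) : exists D, is_derive t (1 : R) (fun s => Lf (Y y0 s)) D /\
   D <= - (d * g^+2 / 4) * nrm2 (Y y0 t).
Proof.
have -> : (fun s => Lf (Y y0 s)) = \sum_(i < n) (fun s => qL (d * g / kk i) (d * g^+2 / 2 / kk i)
   (usubmx (Y y0 s) i 0) (usubmx (dsubmx (Y y0 s)) i 0) (dsubmx (dsubmx (Y y0 s)) i 0)).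
  by apply/funext => s; rewrite fct_sumE.
eexists; split.
  apply: is_derive_sum => i; apply: qL_derive; [exact: du_derive|exact: dv_derive|exact: dw_derive].
rewrite nrm2_split mulr_sumr; apply: ler_sum => i _.
exact: (mode_deriv _ _ _ g0 d0 hd (kk1 i)).
Qed.


Lemma Lf_decay y0 (t : R) : 0 <= t -> Lf (Y y0 t) <= expR (- (d * g^+2 / 5 * t)) * Lf y0.
Proof.
move=> t0; set r := d * g^+2 / 5.
pose h s := expR (r * s) * Lf (Y y0 s).
have hder : forall s : R, exists D, is_derive s (1 : R) h D /\ D <= 0.
  move=> s; have [D1 [hD1 hD1le]] := Lf_derive y0 s.
  have he : is_derive s (1 : R) (fun x => expR (r * x)) (expR (r * s) * r).
    have hl : is_derive s (1 : R) (fun x : R => r * x) r.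
      have := is_deriveZ r (is_derive_id s (1 : R)).
      by move=> hh; eapply is_derive_eq; [exact: hh|rewrite /GRing.scale /= mulr1].
    exact: (is_derive1_comp (is_derive_expR (r * s)) hl).
  exists (expR (r * s) *: D1 + Lf (Y y0 s) *: (expR (r * s) * r)); split.
    exact: (is_deriveM he hD1).
  have [_ hL] := andP (Lf_bounds (Y y0 s)).
  have e0 : 0 < expR (r * s) := expR_gt0 _.
  have dg0 : 0 <= d * g^+2 by apply: mulr_ge0; [apply: ltW|apply: sqr_ge0].
  have hN : 0 <= nrm2 (Y y0 s) by apply: sumr_ge0 => i _; apply: sqr_ge0.
  have : D1 + Lf (Y y0 s) * r <= 0.
    rewrite /r; nra.
  rewrite /GRing.scale /= => hh.
  rewrite (_ : _ + _ = expR (r * s) * (D1 + Lf (Y y0 s) * r)); last by ring.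
  by rewrite mulr_ge0_le0 // ltW.
have hdv : forall s : R, derivable h s 1.
  by move=> s; have [D [hD _]] := hder s; case: hD.
have H2 : forall x : R, x \in `]-1, +oo[ -> derive1 h x <= 0.
  by move=> x _; have [D [hD hle]] := hder x; case: hD => _ hv; rewrite derive1E hv.
have H3 : {within `[-1, +oo[, continuous h}.
  by apply: derivable_within_continuous => x _; exact: hdv x.
have H4 : (-1 : R) <= 0 by rewrite lerN10.
have H := @ler0_derive1_nincry R h (-1) (fun x _ => hdv x) H2 H3 0 t H4 t0.
have h0 : h 0 = Lf y0.
  by rewrite /h mulr0 expR0 mul1r /Y expmx0_mul.
have e := expRxMexpNx_1 (r * t).
have -> : Lf (Y y0 t) = expR (- (r * t)) * h t.
  by rewrite /h mulrA (mulrC (expR _)) e mul1r.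
rewrite -h0; apply: ler_wpM2l => //; exact: expR_ge0.
Qed.

End Lyap.


Lemma unit_of_inj m (A : 'M[R]_m) : (forall y : 'cV[R]_m, A *m y = 0 -> y = 0) -> A \in unitmx.
Proof.
move=> hA; rewrite -unitmx_tr -row_free_unit -kermx_eq0.
apply/rowV0P => v /sub_kermxP hv.
have : A *m v^T = 0 by rewrite -[A]trmxK -trmx_mul hv trmx0.
by move=> /hA /(congr1 trmx); rewrite trmxK trmx0.
Qed.

Lemma sq_scale (x p : R) : 0 <= p <= 1 -> (x * p)^+2 <= x^+2.
Proof.
move=> /andP[p0 p1]; rewrite exprMn -[X in _ <= X]mulr1.
apply: ler_wpM2l; first exact: sqr_ge0.
by rewrite -[1](expr1n _ 2) lerXn2r // nnegrE.
Qed.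

Lemma sq_add (x y : R) : (x + y)^+2 <= 2 * x^+2 + 2 * y^+2.
Proof. have := sqr_ge0 (x - y); nra. Qed.

Lemma mode_inv (g k u v w : R) : 1 <= k ->
  u^+2 + v^+2 + w^+2 <= (5 + 6 * g^+2 + 4 * g^+4) *
    ((k * v)^+2 + (- (k * u) + g * (k * w))^+2 + (- (g * (k * v)) - k * (k * w))^+2).
Proof.
move=> k1; have k0 : k != 0 by rewrite gt_eqF // (lt_le_trans _ k1).
set a := k * v; set b := - (k * u) + g * (k * w); set c := - (g * (k * v)) - k * (k * w).
set p := k^-1.
have kp : 0 < k by apply: lt_le_trans k1.
have hp : 0 <= p <= 1 by rewrite invr_ge0 ltW //= invr_le1 // unitfE.
have hp2 : 0 <= p * p <= 1.
  by case/andP: hp => p0 p1; rewrite mulr_ge0 //= -[1]mulr1 ler_pM.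
have ev : v = a * p by rewrite /a /p mulrC mulKf.
have ew : w = - (c + g * a) * (p * p) by rewrite /c /a /p; field.
have eu : u = g * w - b * p by rewrite /b /p ew /c /a; field.
have hv : v^+2 <= a^+2 by rewrite ev; apply: sq_scale.
have hw : w^+2 <= 2 * c^+2 + 2 * g^+2 * a^+2.
  rewrite ew; apply: le_trans (sq_scale _ hp2) _; rewrite sqrrN.
  by apply: le_trans (sq_add _ _) _; rewrite exprMn !mulrA lexx.
have hu : u^+2 <= 2 * g^+2 * w^+2 + 2 * b^+2.
  rewrite {1}eu; apply: le_trans (sq_add _ _) _; rewrite sqrrN exprMn mulrA lerD2l.
  by apply: ler_wpM2l => //; apply: sq_scale.
have ha := sqr_ge0 a; have hb := sqr_ge0 b; have hc := sqr_ge0 c.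
have hg := sqr_ge0 g.
have hg4 : g^+4 = g^+2 * g^+2 by rewrite -exprD.
rewrite hg4; nra.
Qed.


Lemma Re_sum m (f : 'I_m -> R[i]) : complex.Re (\sum_i f i) = \sum_i complex.Re (f i).
Proof. by apply: (big_morph (@complex.Re R)) => [[a b] [c e]|]. Qed.

Lemma Im_sum m (f : 'I_m -> R[i]) : complex.Im (\sum_i f i) = \sum_i complex.Im (f i).
Proof. by apply: (big_morph (@complex.Im R)) => [[a b] [c e]|]. Qed.

Lemma ReM_real (x : R) (z : R[i]) : complex.Re ((x%:C)%C * z) = x * complex.Re z.
Proof. by case: z => a b /=; rewrite mul0r subr0. Qed.

Lemma ImM_real (x : R) (z : R[i]) : complex.Im ((x%:C)%C * z) = x * complex.Im z.
Proof. by case: z => a b /=; rewrite mul0r addr0. Qed.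

Lemma cnorm_real m (B : 'M[R]_m) (c : R) (v : 'cV[R[i]]_m) : 0 <= c ->
  (forall x : 'cV[R]_m, nrm2 (B *m x) <= c * nrm2 x) ->
  cnorm (cmx B *m v) <= Num.sqrt c * cnorm v.
Proof.
move=> c0 hB.
pose vr := \col_i complex.Re (v i 0). pose vi := \col_i complex.Im (v i 0).
have eR : forall i, complex.Re ((cmx B *m v) i 0) = (B *m vr) i 0.
  move=> i; rewrite !mxE Re_sum; apply: eq_bigr => j _; rewrite !mxE ReM_real //.
have eI : forall i, complex.Im ((cmx B *m v) i 0) = (B *m vi) i 0.
  move=> i; rewrite !mxE Im_sum; apply: eq_bigr => j _; rewrite !mxE ImM_real //.
have -> : cnorm (cmx B *m v) = Num.sqrt (nrm2 (B *m vr) + nrm2 (B *m vi)).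
  by rewrite /cnorm /nrm2 -big_split /=; congr Num.sqrt; apply: eq_bigr => i _; rewrite eR eI.
have -> : cnorm v = Num.sqrt (nrm2 vr + nrm2 vi).
  by rewrite /cnorm /nrm2 -big_split /=; congr Num.sqrt; apply: eq_bigr => i _; rewrite !mxE.
rewrite -sqrtrM // ler_sqrt; last first.
  by apply: mulr_ge0 => //; apply: addr_ge0; apply: sumr_ge0 => i _; apply: sqr_ge0.
by rewrite mulrDr; apply: lerD; apply: hB.
Qed.


End S.

Section S2.
Variable R : realType.
Definition Kc (g : R) := 5 + 6 * g^+2 + 4 * g^+4.

Lemma Wn_inv_bound (g : R) n (y : 'cV[R]_(n + (n + n))) : nrm2 y <= Kc g * nrm2 (Wn g n *m y).
Proof.
rewrite !nrm2_split Wn_mul !col_mxKd !col_mxKu mulr_sumr; apply: ler_sum => i _.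
rewrite /Dn !mul_diag_mx !mxE.
have k1 : 1 <= (i.+1)%:R :> R by rewrite ler1n.
rewrite /Kc; apply: (@mode_inv R g _ _ _ _ k1).
Qed.

Lemma nrm2_ge0 m (y : 'cV[R]_m) : 0 <= nrm2 y.
Proof. by apply: sumr_ge0 => i _; apply: sqr_ge0. Qed.

Lemma nrm2_eq0 m (y : 'cV[R]_m) : nrm2 y <= 0 -> y = 0.
Proof.
move=> h; apply/matrixP => r c; rewrite (ord1 c) mxE.
have : y r 0 ^+ 2 <= 0.
  apply: le_trans h; rewrite /nrm2 (bigD1 r) //= lerDl.
  by apply: sumr_ge0 => i _; apply: sqr_ge0.
by move=> hr; apply/eqP; rewrite -sqrf_eq0 eq_le hr sqr_ge0.
Qed.

Lemma nrm2_0 m : nrm2 (0 : 'cV[R]_m) = 0.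
Proof. by rewrite /nrm2 big1 // => i _; rewrite mxE expr0n. Qed.

Lemma Kc_ge0 (g : R) : 0 <= Kc g.
Proof.
have h4 : 0 <= g^+4 by rewrite (_ : 4 = 2 * 2)%N // exprM sqr_ge0.
have h2 := sqr_ge0 g.
rewrite /Kc; lra.
Qed.

Lemma Wn_unit (g : R) n : Wn g n \in unitmx.
Proof.
apply: unit_of_inj => y hy; apply: nrm2_eq0.
by have := Wn_inv_bound g y; rewrite hy nrm2_0 mulr0.
Qed.

End S2.

Lemma decay_bound (R : realType) (g d : R) n (g0 : 0 < g) (d0 : 0 < d)
  (hd : d * (2 * (1 + g ^+ 2 + (g ^+ 2 / 2 - 1) ^+ 2)) = 1) (t : R) (t0 : 0 <= t)
  (x : 'cV[R]_(n + (n + n))) :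
  nrm2 ((Tn g n t *m invmx (Wn g n)) *m x) <= 5/3 * Kc g * expR (- (d * g ^+ 2 / 5 * t)) * nrm2 x.
Proof.
set y0 := invmx (Wn g n) *m x.
have ex : Wn g n *m y0 = x by rewrite /y0 mulKVmx // Wn_unit.
have -> : (Tn g n t *m invmx (Wn g n)) *m x = Y g y0 t by rewrite -mulmxA.
have [hl1 _] := andP (Lf_bounds g0 d0 hd (Y g y0 t)).
have [_ hu0] := andP (Lf_bounds g0 d0 hd y0).
have hdec := Lf_decay g0 d0 hd y0 t0.
have hK := Wn_inv_bound g y0; rewrite ex in hK.
set e := expR _ in hdec *.
have e0 : 0 <= e by apply: expR_ge0.
have n0 := nrm2_ge0 y0. have nx := nrm2_ge0 x. have K0 := Kc_ge0 g.
have n1 := nrm2_ge0 (Y g y0 t).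
nra.
Qed.

Unset Implicit Arguments.
Local Close Scope classical_set_scope.

Theorem theorem4p8 (R : realType) (gamma : R) (hgamma : 0 < gamma) :
  exists M : R, 0 < M /\
    forall (n : nat) (t : R), 0 < t ->
      opnorm_le (Tn gamma n t *m invmx (Wn gamma n)) (M / Num.sqrt t).
Proof.
set c2 := gamma ^+ 2 / 2 - 1.
set d := (2 * (1 + gamma ^+ 2 + c2 ^+ 2))^-1.
have pos : 0 < 2 * (1 + gamma ^+ 2 + c2 ^+ 2).
  by apply: mulr_gt0 => //; apply: ltr_wpDr; [apply: sqr_ge0|apply: ltr_wpDr; [apply: sqr_ge0|]].
have d0 : 0 < d by rewrite invr_gt0.
have hd : d * (2 * (1 + gamma ^+ 2 + (gamma ^+ 2 / 2 - 1) ^+ 2)) = 1 by rewrite mulVf // gt_eqF.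
set r := d * gamma ^+ 2 / 5.
have r0 : 0 < r by apply: divr_gt0 => //; apply: mulr_gt0 => //; apply: exprn_gt0.
have K0 : 0 < Kc gamma.
  have h4 : 0 <= gamma ^+ 4 by rewrite (_ : 4 = 2 * 2)%N // exprM sqr_ge0.
  have h2 := sqr_ge0 gamma; rewrite /Kc; lra.
exists (Num.sqrt (5 * Kc gamma / (3 * r))); split.
  by rewrite sqrtr_gt0; apply: divr_gt0; [apply: mulr_gt0|apply: mulr_gt0].
move=> n t t0 v.
set c := 5/3 * Kc gamma * expR (- (r * t)).
have c0 : 0 <= c by apply: mulr_ge0; [apply: mulr_ge0 => //; apply: ltW|apply: expR_ge0].
apply: le_trans (cnorm_real v c0 _) _.
  by move=> x; apply: (decay_bound hgamma d0 hd (ltW t0)).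
apply: ler_wpM2r; first by rewrite sqrtr_ge0.
have st : 0 < Num.sqrt t by rewrite sqrtr_gt0.
rewrite ler_pdivlMr // -sqrtrM // ler_sqrt; last first.
  by apply: divr_ge0; [apply: mulr_ge0 => //; apply: ltW|apply: mulr_ge0 => //; apply: ltW].
have key : expR (- (r * t)) * (r * t) <= 1.
  rewrite -(expRxMexpNx_1 (r * t)) mulrC ler_wpM2r ?expR_ge0 //.
  by apply: le_trans (expR_ge1Dx _); rewrite lerDr.
have r0' : r != 0 by rewrite gt_eqF.
have -> : c * t = 5 * Kc gamma / (3 * r) * (expR (- (r * t)) * (r * t)) by rewrite /c; field.
rewrite -[X in _ <= X]mulr1; apply: ler_wpM2l => //.
by apply: divr_ge0; [apply: mulr_ge0 => //; apply: ltW|apply: mulr_ge0 => //; apply: ltW].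
Qed.
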